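(* Let $F_{ij}$ ($0\le i\le m$, $0\le j\le n$) be a dual-convex $m\times n$ net in $I^3$. A collection of points $G_{ij}$ is a velocity diagram of $F_{ij}$ if and only if $G_{ij}$ is an $m\times n$ net which is v-parallel to $F_{ij}$, is not contained in a single plane, and has vanishing mixed curvature with $F_{ij}$ at all pairs of corresponding vertices.
   Context: $I^3$ is $\mathbb{R}^3$ with coordinates $(x,y,z)$; isotropic = parallel to the $z$-axis; top view $\overline P$ of $P=(x,y,z)$ is $(x,y)$ (also identified with $(x,y,0)$). Metric duality: point $P=(P^1,P^2,P^3)\leftrightarrow$ plane $P^*\colon z=P^1x+P^2y-P^3$. Infinitesimal isotropic congruence: vector field $V(\mathbf x)=a\mathbf x+\mathbf b$, $\mathbf b\in\mathbb R^3$, $a=\begin{pmatrix}0&-\phi&0\\ \phi&0&0\\ c_1&c_2&0\end{pmatrix}$. An $m\times n$ net: points $F_{ij}$, $0\le i\le m,0\le j\le n$, with $F_{ij},F_{i+1,j},F_{i+1,j+1},F_{i,j+1}$ consecutive vertices of a convex planar quadrilateral (face $p_{ij}$) for all $0\le i<m,0\le j<n$. Boundary vertices: $i\in\{0,m\}$ or $j\in\{0,n\}$; consecutive faces around non-boundary $F_{ij}$: $p_{i-1,j-1},p_{i,j-1},p_{ij},p_{i-1,j}$. Convex 4-hedral angle, flat angles, admissible (isotropic line through the vertex meets the interior); dual-convex: $m,n\ge2$ and at each non-boundary vertex the four consecutive face planes are planes of four consecutive flat angles of an admissible convex 4-hedral angle. Two nets are v-parallel if vertices with equal indices have equal top views.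 Curvature at a non-boundary vertex with consecutive faces $p_1..p_4$: oriented area $\Omega=\frac12\sum_{k=1}^4\det(\overline{p_k^*},\overline{p_{k+1}^*})$ ($p_5=p_1$) of the closed broken line $\overline{p_1^*}\,\overline{p_2^*}\,\overline{p_3^*}\,\overline{p_4^*}$ (top view of the isotropic Gauss image). Mixed area of plane closed broken lines $ABCD$, $A'B'C'D'$: $\frac{d}{dt}|_{t=0}\mathrm{Area}((A+tA')(B+tB')(C+tC')(D+tD'))$. Mixed curvature of corresponding non-boundary vertices of two v-parallel nets: mixed area of the top views of their isotropic Gauss images; at boundary vertices it is defined to be $0$. Infinitesimal isotropic isometric deformation of dual-convex $F_{ij}$: vectors $V_{ij}$ such that for each face there is an infinitesimal isotropic congruence $V$ with $V_{ij}=V(F_{ij})$ at its four vertices, and $\frac{d}{dt}\Omega(F_{ij}+tV_{ij})|_{t=0}=0$ at each non-boundary vertex; trivial if a single $V$ works for all vertices. A velocity diagram of $F_{ij}$ is the collection $\overline{F_{ij}}+V_{ij}$, where $V_{ij}$ is a nontrivial infinitesimal isotropic isometric deformation of $F_{ij}$ consisting of vectors parallel to the $z$-axis. *)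

(* Defs.v *)
From Stdlib Require Import Reals.
From Coquelicot Require Import Coquelicot.
Open Scope R_scope.

(** Points / vectors of I^3 = R^3 with coordinates (x,y,z); z is the isotropic direction. *)
Record pt := mkpt { px : R; py : R; pz : R }.

Definition padd (u v : pt) : pt := mkpt (px u + px v) (py u + py v) (pz u + pz v).
Definition psub (u v : pt) : pt := mkpt (px u - px v) (py u - py v) (pz u - pz v).
Definition pscal (t : R) (u : pt) : pt := mkpt (t * px u) (t * py u) (t * pz u).

Definition det3 (u v w : pt) : R :=
  px u * (py v * pz w - pz v * py w)
  - py u * (px v * pz w - pz v * px w)
  + pz u * (px v * py w - py v * px w).

Definition det2 (a b : R * R) : R := fst a * snd b - snd a * fst b.

(** A, B, C, D are consecutive vertices of a (non-degenerate) convex planar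
    quadrilateral: A, B, C are not collinear and the diagonals AC and BD
    meet at a point interior to both of them. *)
Definition convex_quad (A B C D : pt) : Prop :=
  (exists w : pt, det3 (psub B A) (psub C A) w <> 0) /\
  exists s t : R, 0 < s < 1 /\ 0 < t < 1 /\
    padd A (pscal s (psub C A)) = padd B (pscal t (psub D B)).

(** m x n net: F i j for 0 <= i <= m, 0 <= j <= n (values outside are irrelevant). *)
Definition is_net (m n : nat) (F : nat -> nat -> pt) : Prop :=
  forall i j : nat, (i < m)%nat -> (j < n)%nat ->
    convex_quad (F i j) (F (S i) j) (F (S i) (S j)) (F i (S j)).

Definition parallel_to_face (P : nat -> nat -> pt) (i j : nat) (r : pt) : Prop :=
  det3 (psub (P (S i) j) (P i j)) (psub (P i (S j)) (P i j)) r = 0.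

(** Convex 4-hedral angle with edge directions r1, r2, r3, r4 (in cyclic order),
    flat angles spanned by (r1,r2), (r2,r3), (r3,r4), (r4,r1): each face plane
    leaves the two other edges strictly on the same side, with consistent orientation. *)
Definition convex4 (r1 r2 r3 r4 : pt) : Prop :=
  (0 < det3 r1 r2 r3 /\ 0 < det3 r1 r2 r4 /\ 0 < det3 r2 r3 r4 /\ 0 < det3 r2 r3 r1 /\
   0 < det3 r3 r4 r1 /\ 0 < det3 r3 r4 r2 /\ 0 < det3 r4 r1 r2 /\ 0 < det3 r4 r1 r3) \/
  (det3 r1 r2 r3 < 0 /\ det3 r1 r2 r4 < 0 /\ det3 r2 r3 r4 < 0 /\ det3 r2 r3 r1 < 0 /\
   det3 r3 r4 r1 < 0 /\ det3 r3 r4 r2 < 0 /\ det3 r4 r1 r2 < 0 /\ det3 r4 r1 r3 < 0).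

(** Admissible: the isotropic line through the vertex meets the interior of the
    angle, i.e. some strictly positive combination of the edges is isotropic. *)
Definition admissible4 (r1 r2 r3 r4 : pt) : Prop :=
  exists l1 l2 l3 l4 : R, 0 < l1 /\ 0 < l2 /\ 0 < l3 /\ 0 < l4 /\
    l1 * px r1 + l2 * px r2 + l3 * px r3 + l4 * px r4 = 0 /\
    l1 * py r1 + l2 * py r2 + l3 * py r3 + l4 * py r4 = 0.

(** Dual-convex m x n net. Faces around non-boundary F_ij:
    p_{i-1,j-1}, p_{i,j-1}, p_{ij}, p_{i-1,j}. *)
Definition dual_convex (m n : nat) (F : nat -> nat -> pt) : Prop :=
  (2 <= m)%nat /\ (2 <= n)%nat /\ is_net m n F /\
  forall i j : nat, (0 < i < m)%nat -> (0 < j < n)%nat ->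
    exists r1 r2 r3 r4 : pt, convex4 r1 r2 r3 r4 /\ admissible4 r1 r2 r3 r4 /\
      parallel_to_face F (pred i) (pred j) r1 /\ parallel_to_face F (pred i) (pred j) r2 /\
      parallel_to_face F i (pred j) r2 /\ parallel_to_face F i (pred j) r3 /\
      parallel_to_face F i j r3 /\ parallel_to_face F i j r4 /\
      parallel_to_face F (pred i) j r4 /\ parallel_to_face F (pred i) j r1.

(** Top view of the metric dual p* of the plane of face p_ij of P.
    If the plane is z = a x + b y + c then p* = (a, b, -c), whose top view is (a, b).
    (a, b) is computed by Cramer's rule from the vertices P_ij, P_{i+1,j}, P_{i,j+1}. *)
Definition face_dual_top (P : nat -> nat -> pt) (i j : nat) : R * R :=
  let A := P i j in let B := P (S i) j in let D := P i (S j) in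
  let dx1 := px B - px A in let dy1 := py B - py A in let dz1 := pz B - pz A in
  let dx2 := px D - px A in let dy2 := py D - py A in let dz2 := pz D - pz A in
  let den := dx1 * dy2 - dx2 * dy1 in
  ((dz1 * dy2 - dz2 * dy1) / den, (dx1 * dz2 - dx2 * dz1) / den).

Definition area4 (q1 q2 q3 q4 : R * R) : R :=
  / 2 * (det2 q1 q2 + det2 q2 q3 + det2 q3 q4 + det2 q4 q1).

Definition curvature (P : nat -> nat -> pt) (i j : nat) : R :=
  area4 (face_dual_top P (pred i) (pred j)) (face_dual_top P i (pred j))
        (face_dual_top P i j) (face_dual_top P (pred i) j).

Definition padd2 (a b : R * R) : R * R := (fst a + fst b, snd a + snd b).
Definition pscal2 (t : R) (a : R * R) : R * R := (t * fst a, t * snd a).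

(** Mixed area of closed broken lines ABCD and A'B'C'D' equals 0
    (the derivative at t = 0 of Area((A+tA')(B+tB')(C+tC')(D+tD')) is 0). *)
Definition mixed_area_zero (A B C D A' B' C' D' : R * R) : Prop :=
  is_derive (fun t : R => area4 (padd2 A (pscal2 t A')) (padd2 B (pscal2 t B'))
                               (padd2 C (pscal2 t C')) (padd2 D (pscal2 t D'))) 0 0.

(** Vanishing mixed curvature of v-parallel nets F, G at the vertex (i,j)
    (at boundary vertices it is 0 by definition, hence the condition is trivial). *)
Definition mixed_curvature_zero (m n : nat) (F G : nat -> nat -> pt) (i j : nat) : Prop :=
  (0 < i < m)%nat -> (0 < j < n)%nat ->
  mixed_area_zero
    (face_dual_top F (pred i) (pred j)) (face_dual_top F i (pred j))
    (face_dual_top F i j) (face_dual_top F (pred i) j)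
    (face_dual_top G (pred i) (pred j)) (face_dual_top G i (pred j))
    (face_dual_top G i j) (face_dual_top G (pred i) j).

(** Infinitesimal isotropic congruence V(x) = a x + b with
    a = [[0,-phi,0],[phi,0,0],[c1,c2,0]], b = (b1,b2,b3). *)
Definition iso_cong (phi c1 c2 b1 b2 b3 : R) (x : pt) : pt :=
  mkpt (- phi * py x + b1) (phi * px x + b2) (c1 * px x + c2 * py x + b3).

Definition iso_isometric_deformation (m n : nat) (F V : nat -> nat -> pt) : Prop :=
  (forall i j : nat, (i < m)%nat -> (j < n)%nat ->
     exists phi c1 c2 b1 b2 b3 : R,
       V i j = iso_cong phi c1 c2 b1 b2 b3 (F i j) /\
       V (S i) j = iso_cong phi c1 c2 b1 b2 b3 (F (S i) j) /\
       V (S i) (S j) = iso_cong phi c1 c2 b1 b2 b3 (F (S i) (S j)) /\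
       V i (S j) = iso_cong phi c1 c2 b1 b2 b3 (F i (S j))) /\
  (forall i j : nat, (0 < i < m)%nat -> (0 < j < n)%nat ->
     is_derive (fun t : R => curvature (fun k l => padd (F k l) (pscal t (V k l))) i j) 0 0).

Definition trivial_deformation (m n : nat) (F V : nat -> nat -> pt) : Prop :=
  exists phi c1 c2 b1 b2 b3 : R, forall i j : nat, (i <= m)%nat -> (j <= n)%nat ->
    V i j = iso_cong phi c1 c2 b1 b2 b3 (F i j).

Definition velocity_diagram (m n : nat) (F G : nat -> nat -> pt) : Prop :=
  exists V : nat -> nat -> pt,
    iso_isometric_deformation m n F V /\ ~ trivial_deformation m n F V /\
    (forall i j : nat, (i <= m)%nat -> (j <= n)%nat -> px (V i j) = 0 /\ py (V i j) = 0) /\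
    (forall i j : nat, (i <= m)%nat -> (j <= n)%nat ->
       G i j = padd (mkpt (px (F i j)) (py (F i j)) 0) (V i j)).

Definition v_parallel (m n : nat) (F G : nat -> nat -> pt) : Prop :=
  forall i j : nat, (i <= m)%nat -> (j <= n)%nat ->
    px (G i j) = px (F i j) /\ py (G i j) = py (F i j).

Definition in_one_plane (m n : nat) (G : nat -> nat -> pt) : Prop :=
  exists a b c d : R, (a <> 0 \/ b <> 0 \/ c <> 0) /\
    forall i j : nat, (i <= m)%nat -> (j <= n)%nat ->
      a * px (G i j) + b * py (G i j) + c * pz (G i j) = d.

(* Main.v *)
Require Import Defs.
From Stdlib Require Import Reals Lra Lia Psatz.
From Coquelicot Require Import Coquelicot.
Open Scope R_scope.

Definition cr2 (u v : pt) : R := px u * py v - py u * px v.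

Lemma pt_eta p : p = mkpt (px p) (py p) (pz p).
Proof. destruct p; reflexivity. Qed.

Lemma core A B C D ra rb rc rd la lb lc ld :
  convex_quad A B C D ->
  det3 (psub B A) (psub D A) ra = 0 -> det3 (psub B A) (psub D A) rb = 0 ->
  ((0 < det3 ra rb rc /\ 0 < det3 ra rb rd) \/ (det3 ra rb rc < 0 /\ det3 ra rb rd < 0)) ->
  0 < la -> 0 < lb -> 0 < lc -> 0 < ld ->
  la * px ra + lb * px rb + lc * px rc + ld * px rd = 0 ->
  la * py ra + lb * py rb + lc * py rc + ld * py rd = 0 ->
  cr2 (psub B A) (psub D A) <> 0.
Proof.
  intros [[w Hw] [s [t [Hs [Ht Heq]]]]] Ha Hb Hsg Hla Hlb Hlc Hld Hx Hy Hc.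
  set (Dd := px ra * py rb - py ra * px rb).
  assert (E : la * det3 ra rb ra + lb * det3 ra rb rb + lc * det3 ra rb rc + ld * det3 ra rb rd
     = (la * px ra + lb * px rb + lc * px rc + ld * px rd) * (py ra * pz rb - pz ra * py rb)
     + (la * py ra + lb * py rb + lc * py rc + ld * py rd) * (pz ra * px rb - px ra * pz rb)
     + (la * pz ra + lb * pz rb + lc * pz rc + ld * pz rd) * Dd)
    by (unfold det3, Dd; ring).
  assert (Z1 : det3 ra rb ra = 0) by (unfold det3; ring).
  assert (Z2 : det3 ra rb rb = 0) by (unfold det3; ring).
  rewrite Z1, Z2, Hx, Hy in E.
  assert (HD : Dd <> 0).
  { intro HD0; rewrite HD0 in E.
    destruct Hsg as [[h1 h2]|[h1 h2]]; nra. }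
  destruct A as [ax ay az], B as [bx by0 bz], C as [cx cy cz], D as [dx dy dz].
  unfold det3, psub, cr2 in *; cbn [px py pz] in *.
  set (e1x := bx - ax) in *. set (e1y := by0 - ay) in *. set (e1z := bz - az) in *.
  set (e2x := dx - ax) in *. set (e2y := dy - ay) in *. set (e2z := dz - az) in *.
  set (N1 := e1y * e2z - e1z * e2y). set (N2 := e1z * e2x - e1x * e2z).
  assert (Ha' : px ra * N1 + py ra * N2 + pz ra * (e1x * e2y - e1y * e2x) = 0)
    by (rewrite <- Ha; unfold N1, N2; ring).
  assert (Hb' : px rb * N1 + py rb * N2 + pz rb * (e1x * e2y - e1y * e2x) = 0)
    by (rewrite <- Hb; unfold N1, N2; ring).
  assert (Hc' : e1x * e2y - e1y * e2x = 0) by lra.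
  rewrite Hc' in Ha', Hb'.
  assert (K1 : Dd * N1 = py rb * (px ra * N1 + py ra * N2 + pz ra * 0)
                        - py ra * (px rb * N1 + py rb * N2 + pz rb * 0))
    by (unfold Dd; ring).
  assert (K2 : Dd * N2 = - px rb * (px ra * N1 + py ra * N2 + pz ra * 0)
                        + px ra * (px rb * N1 + py rb * N2 + pz rb * 0))
    by (unfold Dd; ring).
  rewrite Ha', Hb' in K1, K2.
  assert (N1z : N1 = 0) by (apply (Rmult_eq_reg_l Dd); [lra| exact HD]).
  assert (N2z : N2 = 0) by (apply (Rmult_eq_reg_l Dd); [lra| exact HD]).
  injection Heq; intros q3 q2 q1.
  assert (c1 : s * (cx - ax) = (1 - t) * e1x + t * e2x) by (unfold e1x, e2x; lra).
  assert (c2 : s * (cy - ay) = (1 - t) * e1y + t * e2y) by (unfold e1y, e2y; lra).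
  assert (c3 : s * (cz - az) = (1 - t) * e1z + t * e2z) by (unfold e1z, e2z; lra).
  apply Hw.
  apply (Rmult_eq_reg_l s); [|lra].
  transitivity (e1x * (s * (cy - ay) * pz w - s * (cz - az) * py w) -
                e1y * (s * (cx - ax) * pz w - s * (cz - az) * px w) +
                e1z * (s * (cx - ax) * py w - s * (cy - ay) * px w)); [ring|].
  rewrite c1, c2, c3.
  transitivity (t * (px w * N1 + py w * N2 + pz w * (e1x * e2y - e1y * e2x))).
  { unfold N1, N2; ring. }
  rewrite N1z, N2z, Hc'; ring.
Qed.

Lemma face_nondeg m n F a b : dual_convex m n F -> (a < m)%nat -> (b < n)%nat ->
  cr2 (psub (F (S a) b) (F a b)) (psub (F a (S b)) (F a b)) <> 0.
Proof.
  intros [Hm [Hn [Hnet Hdc]]] Ha Hb.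
  pose proof (Hnet a b Ha Hb) as Hq.
  assert (Hi : exists i', (0 < i' < m)%nat /\ (i' = S a \/ i' = a)).
  { destruct (Nat.lt_ge_cases (S a) m). exists (S a); split; [lia|auto].
    exists a; split; [lia|auto]. }
  assert (Hj : exists j', (0 < j' < n)%nat /\ (j' = S b \/ j' = b)).
  { destruct (Nat.lt_ge_cases (S b) n). exists (S b); split; [lia|auto].
    exists b; split; [lia|auto]. }
  destruct Hi as [i' [Hi' Ei]], Hj as [j' [Hj' Ej]].
  destruct (Hdc i' j' Hi' Hj') as [r1 [r2 [r3 [r4 [Hc [[l1 [l2 [l3 [l4 [h1 [h2 [h3 [h4 [hx hy]]]]]]]]] P]]]]]].
  unfold parallel_to_face in P.
  destruct P as [p1 [p2 [p3 [p4 [p5 [p6 [p7 p8]]]]]]].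
  destruct Ei as [Ei|Ei], Ej as [Ej|Ej]; subst i' j'; cbn [pred] in *.
  - eapply (core _ _ _ _ r1 r2 r3 r4 l1 l2 l3 l4); eauto.
    destruct Hc as [Hc|Hc]; [left|right]; tauto.
  - eapply (core _ _ _ _ r4 r1 r2 r3 l4 l1 l2 l3); eauto.
    destruct Hc as [Hc|Hc]; [left|right]; tauto. lra. lra.
  - eapply (core _ _ _ _ r2 r3 r4 r1 l2 l3 l4 l1); eauto.
    destruct Hc as [Hc|Hc]; [left|right]; tauto. lra. lra.
  - eapply (core _ _ _ _ r3 r4 r1 r2 l3 l4 l1 l2); eauto.
    destruct Hc as [Hc|Hc]; [left|right]; tauto. lra. lra.
Qed.

Lemma fdt_lin m n F G V a b t :
  (forall k l, (k <= m)%nat -> (l <= n)%nat -> px (V k l) = 0 /\ py (V k l) = 0 /\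
     px (G k l) = px (F k l) /\ py (G k l) = py (F k l) /\ pz (G k l) = pz (V k l)) ->
  (S a <= m)%nat -> (S b <= n)%nat ->
  cr2 (psub (F (S a) b) (F a b)) (psub (F a (S b)) (F a b)) <> 0 ->
  face_dual_top (fun k l => padd (F k l) (pscal t (V k l))) a b =
  padd2 (face_dual_top F a b) (pscal2 t (face_dual_top G a b)).
Proof.
  intros HV Ha Hb Hd.
  destruct (HV a b ltac:(lia) ltac:(lia)) as [v1 [v2 [g1 [g2 g3]]]].
  destruct (HV (S a) b ltac:(lia) ltac:(lia)) as [v4 [v5 [g4 [g5 g6]]]].
  destruct (HV a (S b) ltac:(lia) ltac:(lia)) as [v7 [v8 [g7 [g8 g9]]]].
  unfold face_dual_top, padd2, pscal2, padd, pscal; cbn [px py pz fst snd].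
  rewrite v1, v2, v4, v5, v7, v8, g1, g2, g3, g4, g5, g6, g7, g8, g9.
  unfold cr2, psub in Hd; cbn [px py pz] in Hd.
  rewrite !Rmult_0_r, !Rplus_0_r.
  f_equal; field; intro HH; apply Hd; lra.
Qed.

Lemma curv_eq m n F G V i j t : dual_convex m n F ->
  (forall k l, (k <= m)%nat -> (l <= n)%nat -> px (V k l) = 0 /\ py (V k l) = 0 /\
     px (G k l) = px (F k l) /\ py (G k l) = py (F k l) /\ pz (G k l) = pz (V k l)) ->
  (0 < i < m)%nat -> (0 < j < n)%nat ->
  curvature (fun k l => padd (F k l) (pscal t (V k l))) i j =
  area4 (padd2 (face_dual_top F (pred i) (pred j)) (pscal2 t (face_dual_top G (pred i) (pred j))))
        (padd2 (face_dual_top F i (pred j)) (pscal2 t (face_dual_top G i (pred j))))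
        (padd2 (face_dual_top F i j) (pscal2 t (face_dual_top G i j)))
        (padd2 (face_dual_top F (pred i) j) (pscal2 t (face_dual_top G (pred i) j))).
Proof.
  intros HF HV Hi Hj. unfold curvature.
  rewrite !(fdt_lin m n F G V); try lia; auto;
  apply (face_nondeg m n); auto; lia.
Qed.

Lemma quad_L A B C D c1 c2 b3 :
  convex_quad A B C D -> cr2 (psub B A) (psub D A) <> 0 ->
  convex_quad (mkpt (px A) (py A) (c1 * px A + c2 * py A + b3))
              (mkpt (px B) (py B) (c1 * px B + c2 * py B + b3))
              (mkpt (px C) (py C) (c1 * px C + c2 * py C + b3))
              (mkpt (px D) (py D) (c1 * px D + c2 * py D + b3)).
Proof.
  intros [_ [s [t [Hs [Ht Heq]]]]] Hd.
  destruct A as [ax ay az], B as [bx by0 bz], C as [cx cy cz], D as [dx dy dz].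
  unfold convex_quad, det3, psub, padd, pscal, cr2 in *; cbn [px py pz] in *.
  injection Heq; intros q3 q2 q1.
  split.
  - exists (mkpt 0 0 1); cbn [px py pz].
    intro HH. apply Hd.
    assert (c1' : s * (cx - ax) = (1 - t) * (bx - ax) + t * (dx - ax)) by lra.
    assert (c2' : s * (cy - ay) = (1 - t) * (by0 - ay) + t * (dy - ay)) by lra.
    assert (E : s * ((bx - ax) * (cy - ay) - (by0 - ay) * (cx - ax)) =
               t * ((bx - ax) * (dy - ay) - (by0 - ay) * (dx - ax))).
    { transitivity ((bx - ax) * (s * (cy - ay)) - (by0 - ay) * (s * (cx - ax))); [ring|].
      rewrite c1', c2'; ring. }
    assert (E2 : (bx - ax) * (cy - ay) - (by0 - ay) * (cx - ax) = 0).
    { rewrite <- HH; ring. }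
    rewrite E2, Rmult_0_r in E.
    apply (Rmult_eq_reg_l t); lra.
  - exists s, t; repeat split; try lra.
    f_equal; try lra.
    transitivity (c1 * (ax + s * (cx - ax)) + c2 * (ay + s * (cy - ay)) + b3); [ring|].
    rewrite q1, q2; ring.
Qed.

Lemma quad_plane A B C D : convex_quad A B C D -> cr2 (psub B A) (psub D A) <> 0 ->
  exists c1 c2 b3, pz A = c1 * px A + c2 * py A + b3 /\ pz B = c1 * px B + c2 * py B + b3 /\
    pz C = c1 * px C + c2 * py C + b3 /\ pz D = c1 * px D + c2 * py D + b3.
Proof.
  intros [_ [s [t [Hs [Ht Heq]]]]] Hd.
  destruct A as [ax ay az], B as [bx by0 bz], C as [cx cy cz], D as [dx dy dz].
  unfold psub, padd, pscal, cr2 in *; cbn [px py pz] in *.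
  injection Heq; intros q3 q2 q1.
  set (den := (bx - ax) * (dy - ay) - (by0 - ay) * (dx - ax)) in *.
  set (c1 := ((bz - az) * (dy - ay) - (dz - az) * (by0 - ay)) / den).
  set (c2 := ((bx - ax) * (dz - az) - (dx - ax) * (bz - az)) / den).
  exists c1, c2, (az - c1 * ax - c2 * ay).
  assert (EB : bz - az = c1 * (bx - ax) + c2 * (by0 - ay)) by (unfold c1, c2, den in *; field; auto).
  assert (ED : dz - az = c1 * (dx - ax) + c2 * (dy - ay)) by (unfold c1, c2, den in *; field; auto).
  assert (EC : s * (cz - az) = s * (c1 * (cx - ax) + c2 * (cy - ay))).
  { assert (e1 : s * (cz - az) = (1 - t) * (bz - az) + t * (dz - az)) by lra.
    assert (e2 : s * (cx - ax) = (1 - t) * (bx - ax) + t * (dx - ax)) by lra.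
    assert (e3 : s * (cy - ay) = (1 - t) * (by0 - ay) + t * (dy - ay)) by lra.
    rewrite e1.
    transitivity (c1 * (s * (cx - ax)) + c2 * (s * (cy - ay))); [|ring].
    rewrite e2, e3, EB, ED; ring. }
  apply Rmult_eq_reg_l in EC; [|lra].
  repeat split; lra.
Qed.

Theorem lemma4 (m n : nat) (F : nat -> nat -> pt) (HF : dual_convex m n F)
  (G : nat -> nat -> pt) :
  velocity_diagram m n F G <->
  (is_net m n G /\ v_parallel m n F G /\ ~ in_one_plane m n G /\
   forall i j : nat, (i <= m)%nat -> (j <= n)%nat -> mixed_curvature_zero m n F G i j).
Proof.
  pose proof HF as [Hm [Hn [HnetF _]]].
  split.
  - intros [V [[Hcong Hder] [Hnt [Hvert HG]]]].
    assert (HV : forall k l, (k <= m)%nat -> (l <= n)%nat -> px (V k l) = 0 /\ py (V k l) = 0 /\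
       px (G k l) = px (F k l) /\ py (G k l) = py (F k l) /\ pz (G k l) = pz (V k l)).
    { intros k l Hk Hl. destruct (Hvert k l Hk Hl) as [h1 h2].
      rewrite (HG k l Hk Hl); unfold padd; cbn [px py pz].
      rewrite h1, h2; repeat split; ring. }
    split; [|split; [|split]].
    + intros i j Hi Hj.
      destruct (Hcong i j Hi Hj) as [phi [c1 [c2 [b1 [b2 [b3 [e1 [e2 [e3 e4]]]]]]]]].
      assert (HL : forall k l, (k <= m)%nat -> (l <= n)%nat ->
                V k l = iso_cong phi c1 c2 b1 b2 b3 (F k l) ->
                G k l = mkpt (px (F k l)) (py (F k l)) (c1 * px (F k l) + c2 * py (F k l) + b3)).
      { intros k l Hk Hl Ek. destruct (HV k l Hk Hl) as [_ [_ [g1 [g2 g3]]]].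
        rewrite (pt_eta (G k l)), g1, g2, g3, Ek. reflexivity. }
      rewrite (HL i j), (HL (S i) j), (HL (S i) (S j)), (HL i (S j)); try lia; auto.
      apply quad_L; [apply HnetF; auto|].
      apply (face_nondeg m n); auto.
    + intros i j Hi Hj. destruct (HV i j Hi Hj) as [_ [_ [g1 [g2 _]]]]. auto.
    + intros [a [b [c [d [Hne Hpl]]]]].
      destruct (Req_dec c 0) as [Hc|Hc].
      * subst c.
        assert (Hd := face_nondeg m n F 0 0 HF ltac:(lia) ltac:(lia)).
        assert (P : forall k l, (k <= m)%nat -> (l <= n)%nat -> a * px (F k l) + b * py (F k l) = d).
        { intros k l Hk Hl. specialize (Hpl k l Hk Hl).
          destruct (HV k l Hk Hl) as [_ [_ [g1 [g2 _]]]]. rewrite g1, g2 in Hpl. lra. }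
        pose proof (P 0%nat 0%nat ltac:(lia) ltac:(lia)) as P0.
        pose proof (P 1%nat 0%nat ltac:(lia) ltac:(lia)) as P1.
        pose proof (P 0%nat 1%nat ltac:(lia) ltac:(lia)) as P2.
        unfold cr2, psub in Hd; cbn [px py pz] in Hd.
        set (x0 := px (F 0%nat 0%nat)) in *. set (y0 := py (F 0%nat 0%nat)) in *.
        set (x1 := px (F 1%nat 0%nat)) in *. set (y1 := py (F 1%nat 0%nat)) in *.
        set (x2 := px (F 0%nat 1%nat)) in *. set (y2 := py (F 0%nat 1%nat)) in *.
        assert (Ea : a * ((x1 - x0) * (y2 - y0) - (y1 - y0) * (x2 - x0)) =
           (a * x1 + b * y1 - (a * x0 + b * y0)) * (y2 - y0)
           - (a * x2 + b * y2 - (a * x0 + b * y0)) * (y1 - y0)) by ring.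
        assert (Eb : b * ((x1 - x0) * (y2 - y0) - (y1 - y0) * (x2 - x0)) =
           (x1 - x0) * (a * x2 + b * y2 - (a * x0 + b * y0))
           - (x2 - x0) * (a * x1 + b * y1 - (a * x0 + b * y0))) by ring.
        rewrite P0, P1, P2 in Ea, Eb.
        assert (Ea' : a * ((x1 - x0) * (y2 - y0) - (y1 - y0) * (x2 - x0)) = 0) by (rewrite Ea; ring).
        assert (Eb' : b * ((x1 - x0) * (y2 - y0) - (y1 - y0) * (x2 - x0)) = 0) by (rewrite Eb; ring).
        destruct (Rmult_integral _ _ Ea'); [|contradiction].
        destruct (Rmult_integral _ _ Eb'); [|contradiction].
        lra.
      * apply Hnt. exists 0, (- a / c), (- b / c), 0, 0, (d / c).
        intros i j Hi Hj.
        destruct (HV i j Hi Hj) as [v1 [v2 [g1 [g2 g3]]]].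
        specialize (Hpl i j Hi Hj). rewrite g1, g2, g3 in Hpl.
        rewrite (pt_eta (V i j)), v1, v2. unfold iso_cong. f_equal; try ring.
        field_simplify; [|auto]. apply (Rmult_eq_reg_l c); [|auto].
        field_simplify; [|auto]. lra.
    + intros i j _ _ Hi Hj. unfold mixed_area_zero.
      eapply is_derive_ext; [|apply (Hder i j Hi Hj)].
      intro t. apply (curv_eq m n F G V i j t); auto.
  - intros [Hnet [Hvp [Hnp Hmc]]].
    set (V := fun k l => mkpt 0 0 (pz (G k l))).
    assert (HV : forall k l, (k <= m)%nat -> (l <= n)%nat -> px (V k l) = 0 /\ py (V k l) = 0 /\
       px (G k l) = px (F k l) /\ py (G k l) = py (F k l) /\ pz (G k l) = pz (V k l)).
    { intros k l Hk Hl. destruct (Hvp k l Hk Hl). unfold V; cbn [px py pz]. auto. }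
    exists V. split; [split|split; [|split]].
    + intros i j Hi Hj.
      assert (Hd : cr2 (psub (G (S i) j) (G i j)) (psub (G i (S j)) (G i j)) <> 0).
      { pose proof (face_nondeg m n F i j HF Hi Hj) as Hd.
        unfold cr2, psub in *; cbn [px py pz] in *.
        destruct (Hvp i j ltac:(lia) ltac:(lia)) as [a1 a2].
        destruct (Hvp (S i) j ltac:(lia) ltac:(lia)) as [a3 a4].
        destruct (Hvp i (S j) ltac:(lia) ltac:(lia)) as [a5 a6].
        rewrite a1, a2, a3, a4, a5, a6; auto. }
      destruct (quad_plane _ _ _ _ (Hnet i j Hi Hj) Hd) as [c1 [c2 [b3 [e1 [e2 [e3 e4]]]]]].
      exists 0, c1, c2, 0, 0, b3.
      assert (HL : forall k l, (k <= m)%nat -> (l <= n)%nat ->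
                pz (G k l) = c1 * px (G k l) + c2 * py (G k l) + b3 ->
                V k l = iso_cong 0 c1 c2 0 0 b3 (F k l)).
      { intros k l Hk Hl Ek. destruct (Hvp k l Hk Hl) as [g1 g2].
        unfold V, iso_cong. rewrite Ek, g1, g2. f_equal; ring. }
      repeat split; apply HL; auto; lia.
    + intros i j Hi Hj.
      eapply is_derive_ext; [|apply (Hmc i j ltac:(lia) ltac:(lia) Hi Hj)].
      intro t. symmetry. apply (curv_eq m n F G V i j t); auto.
    + intros [phi [c1 [c2 [b1 [b2 [b3 H]]]]]]. apply Hnp.
      exists c1, c2, (-1), (- b3). split; [right; right; lra|].
      intros i j Hi Hj. specialize (H i j Hi Hj).
      apply (f_equal pz) in H. unfold V, iso_cong in H; cbn [pz] in H.
      destruct (Hvp i j Hi Hj) as [g1 g2]. rewrite g1, g2, H. ring.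
    + intros i j Hi Hj. unfold V; cbn [px py]; auto.
    + intros i j Hi Hj. unfold V, padd; cbn [px py pz].
      destruct (Hvp i j Hi Hj) as [g1 g2].
      rewrite (pt_eta (G i j)) at 1. rewrite g1, g2. f_equal; ring.
Qed.
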